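(* Let $\nu\ge0$, $\epsilon\in\{0,1\}$ and let $\zeta$ be a real parameter with $1+\zeta\nu^2\neq0$. Then the equation $$-2\nu^2U_XU_{XX}+3\epsilon U_XU-\nu^2U_{XXX}U+\tfrac23U_{XXX}-\tfrac23\nu^{5/2}U_{XXX}+\epsilon U_T-\nu^2U_{XXT}=0\qquad(E_{\nu,\epsilon})$$ describes pseudo-spherical surfaces with associated one-forms $\omega^i=f_{i1}dX+f_{i2}dT$, where $f_{11}=\frac13\epsilon\zeta+\frac13\sqrt\nu\,\epsilon+\nu^2U_{XX}-\epsilon U+\frac{3}{4(1+\zeta\nu^2)}$, $f_{12}=\frac23(1-\nu^{5/2})U_{XX}+\frac\epsilon3(\zeta+\sqrt\nu)U+\epsilon U^2-\nu^2UU_{XX}-\frac29\epsilon(\zeta^2+2\sqrt\nu\zeta+\nu)-\frac{1}{2(1+\zeta\nu^2)}\big(\tfrac32U+\zeta+\sqrt\nu\big)$, $f_{21}=0$, $f_{22}=-U_X$, $f_{31}=-\frac13\epsilon\zeta-\frac13\sqrt\nu\,\epsilon-\nu^2U_{XX}+\epsilon U+\frac{3}{4(1+\zeta\nu^2)}$, $f_{32}=-\frac23(1-\nu^{5/2})U_{XX}-\frac\epsilon3(\zeta+\sqrt\nu)U-\epsilon U^2+\nu^2UU_{XX}+\frac29\epsilon(\zeta^2+2\sqrt\nu\zeta+\nu)-\frac{1}{2(1+\zeta\nu^2)}\big(\tfrac32U+\zeta+\sqrt\nu\big)$. That is, for every smooth solution $U$ the pulled-back forms satisfy $d\omega^1=\omega^3\wedge\omega^2$,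 $d\omega^2=\omega^1\wedge\omega^3$, $d\omega^3=\omega^1\wedge\omega^2$.
   Context: An equation describes pseudo-spherical surfaces if there are one-forms $\omega^i=f_{i1}dX+f_{i2}dT\neq0$ ($i=1,2,3$), with coefficients smooth functions of the independent variables, $U$ and finitely many derivatives of $U$, whose pullbacks by any solution satisfy the three structure equations $d\omega^1=\omega^3\wedge\omega^2$, $d\omega^2=\omega^1\wedge\omega^3$, $d\omega^3=\omega^1\wedge\omega^2$. *)

(* Defs.v *)
From Stdlib Require Import Reals List.
From Coquelicot Require Import Coquelicot.
Import ListNotations.
Open Scope R_scope.

Definition dX (f : R -> R -> R) : R -> R -> R :=
  fun x t => Derive (fun y => f y t) x.
Definition dT (f : R -> R -> R) : R -> R -> R :=
  fun x t => Derive (fun s => f x s) t.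

Inductive dir := DX | DT.

Fixpoint pd (l : list dir) (f : R -> R -> R) : R -> R -> R :=
  match l with
  | nil => f
  | DX :: l' => dX (pd l' f)
  | DT :: l' => dT (pd l' f)
  end.

Definition smooth2 (U : R -> R -> R) : Prop :=
  forall (l : list dir) (x t : R),
    ex_derive (fun y => pd l U y t) x /\
    ex_derive (fun s => pd l U x s) t /\
    continuous (fun p : R * R => pd l U (fst p) (snd p)) (x, t).

(* The equation E_{nu,eps}; nu^{5/2} = nu^2 * sqrt nu (nu >= 0). *)
Definition E_eq (nu eps : R) (U : R -> R -> R) (x t : R) : Prop :=
  let U0 := U x t in
  let UX := dX U x t in
  let UXX := dX (dX U) x t in
  let UXXX := dX (dX (dX U)) x t in
  let UT := dT U x t in
  let UXXT := dT (dX (dX U)) x t in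
  - 2 * nu ^ 2 * UX * UXX + 3 * eps * UX * U0 - nu ^ 2 * UXXX * U0
  + 2 / 3 * UXXX - 2 / 3 * (nu ^ 2 * sqrt nu) * UXXX
  + eps * UT - nu ^ 2 * UXXT = 0.

(* Coefficients f_ij as functions of the jet variables (u, u_X, u_XX). *)
Definition f11 (nu eps zeta : R) (u u1 u2 : R) : R :=
  1/3 * eps * zeta + 1/3 * sqrt nu * eps + nu ^ 2 * u2 - eps * u
  + 3 / (4 * (1 + zeta * nu ^ 2)).
Definition f12 (nu eps zeta : R) (u u1 u2 : R) : R :=
  2/3 * (1 - nu ^ 2 * sqrt nu) * u2 + eps / 3 * (zeta + sqrt nu) * u
  + eps * u ^ 2 - nu ^ 2 * u * u2
  - 2/9 * eps * (zeta ^ 2 + 2 * sqrt nu * zeta + nu)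
  - 1 / (2 * (1 + zeta * nu ^ 2)) * (3/2 * u + zeta + sqrt nu).
Definition f21 (nu eps zeta : R) (u u1 u2 : R) : R := 0.
Definition f22 (nu eps zeta : R) (u u1 u2 : R) : R := - u1.
Definition f31 (nu eps zeta : R) (u u1 u2 : R) : R :=
  - 1/3 * eps * zeta - 1/3 * sqrt nu * eps - nu ^ 2 * u2 + eps * u
  + 3 / (4 * (1 + zeta * nu ^ 2)).
Definition f32 (nu eps zeta : R) (u u1 u2 : R) : R :=
  - 2/3 * (1 - nu ^ 2 * sqrt nu) * u2 - eps / 3 * (zeta + sqrt nu) * u
  - eps * u ^ 2 + nu ^ 2 * u * u2
  + 2/9 * eps * (zeta ^ 2 + 2 * sqrt nu * zeta + nu)
  - 1 / (2 * (1 + zeta * nu ^ 2)) * (3/2 * u + zeta + sqrt nu).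

Definition jetfun := R -> R -> R -> R.

Definition pull (f : jetfun) (U : R -> R -> R) : R -> R -> R :=
  fun x t => f (U x t) (dX U x t) (dX (dX U) x t).

Definition form_nonzero (a b : jetfun) : Prop :=
  exists u u1 u2, a u u1 u2 <> 0 \/ b u u1 u2 <> 0.

(* d(a dX + b dT) = (b_X - a_T) dX^dT, pulled back by U. *)
Definition dform (a b : jetfun) (U : R -> R -> R) (x t : R) : R :=
  dX (pull b U) x t - dT (pull a U) x t.

(* (a dX + b dT) ^ (c dX + e dT) = (a e - b c) dX^dT, pulled back by U. *)
Definition wedge (a b c e : jetfun) (U : R -> R -> R) (x t : R) : R :=
  pull a U x t * pull e U x t - pull b U x t * pull c U x t.

Definition describes_pss (Eq : (R -> R -> R) -> R -> R -> Prop)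
    (a1 b1 a2 b2 a3 b3 : jetfun) : Prop :=
  form_nonzero a1 b1 /\ form_nonzero a2 b2 /\ form_nonzero a3 b3 /\
  forall U : R -> R -> R, smooth2 U -> (forall x t, Eq U x t) ->
    forall x t,
      dform a1 b1 U x t = wedge a3 b3 a2 b2 U x t /\
      dform a2 b2 U x t = wedge a1 b1 a3 b3 U x t /\
      dform a3 b3 U x t = wedge a1 b1 a2 b2 U x t.

(* Main.v *)
Require Import Defs.
From Stdlib Require Import Reals Lra Psatz.
From Coquelicot Require Import Coquelicot.
Open Scope R_scope.

Section S.
Variables (nu eps zeta : R) (U : R -> R -> R) (x t : R).
Hypothesis HX0 : ex_derive (fun y => U y t) x.
Hypothesis HX2 : ex_derive (fun y => dX (dX U) y t) x.
Hypothesis HX1 : ex_derive (fun y => dX U y t) x.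
Hypothesis HT0 : ex_derive (fun s => U x s) t.
Hypothesis HT2 : ex_derive (fun s => dX (dX U) x s) t.

Lemma d12 : dX (pull (f12 nu eps zeta) U) x t =
  2 / 3 * (1 - nu ^ 2 * sqrt nu) * dX (dX (dX U)) x t
  + eps / 3 * (zeta + sqrt nu) * dX U x t + eps * 2 * U x t * dX U x t
  - nu ^ 2 * dX U x t * dX (dX U) x t - nu ^ 2 * U x t * dX (dX (dX U)) x t
  - 1 / (2 * (1 + zeta * nu ^ 2)) * (3 / 2 * dX U x t).
Proof.
unfold dX at 1; unfold pull, f12.
erewrite is_derive_unique; [| auto_derive; [tauto | reflexivity]].
change (Derive (fun x0 : R => U x0 t) x) with (dX U x t).
change (Derive (fun x0 : R => dX (dX U) x0 t) x) with (dX (dX (dX U)) x t).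
unfold dX, dT; change (nu * (nu * 1)) with (nu ^ 2); ring.
Qed.

Lemma d32 : dX (pull (f32 nu eps zeta) U) x t =
  - 2 / 3 * (1 - nu ^ 2 * sqrt nu) * dX (dX (dX U)) x t
  - eps / 3 * (zeta + sqrt nu) * dX U x t - eps * 2 * U x t * dX U x t
  + nu ^ 2 * dX U x t * dX (dX U) x t + nu ^ 2 * U x t * dX (dX (dX U)) x t
  - 1 / (2 * (1 + zeta * nu ^ 2)) * (3 / 2 * dX U x t).
Proof.
unfold dX at 1; unfold pull, f32.
erewrite is_derive_unique; [| auto_derive; [tauto | reflexivity]].
change (Derive (fun x0 : R => U x0 t) x) with (dX U x t).
change (Derive (fun x0 : R => dX (dX U) x0 t) x) with (dX (dX (dX U)) x t).
unfold dX, dT; change (nu * (nu * 1)) with (nu ^ 2); ring.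
Qed.

Lemma d22 : dX (pull (f22 nu eps zeta) U) x t = - dX (dX U) x t.
Proof.
unfold dX at 1; unfold pull, f22.
erewrite is_derive_unique; [| auto_derive; [tauto | reflexivity]].
change (Derive (fun x0 : R => dX U x0 t) x) with (dX (dX U) x t).
unfold dX, dT; change (nu * (nu * 1)) with (nu ^ 2); ring.
Qed.

Lemma t11 : dT (pull (f11 nu eps zeta) U) x t =
  nu ^ 2 * dT (dX (dX U)) x t - eps * dT U x t.
Proof.
unfold dT at 1; unfold pull, f11.
erewrite is_derive_unique; [| auto_derive; [tauto | reflexivity]].
change (Derive (fun x0 : R => U x x0) t) with (dT U x t).
change (Derive (fun x0 : R => dX (dX U) x x0) t) with (dT (dX (dX U)) x t).
unfold dX, dT; change (nu * (nu * 1)) with (nu ^ 2); ring.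
Qed.

Lemma t31 : dT (pull (f31 nu eps zeta) U) x t =
  - nu ^ 2 * dT (dX (dX U)) x t + eps * dT U x t.
Proof.
unfold dT at 1; unfold pull, f31.
erewrite is_derive_unique; [| auto_derive; [tauto | reflexivity]].
change (Derive (fun x0 : R => U x x0) t) with (dT U x t).
change (Derive (fun x0 : R => dX (dX U) x x0) t) with (dT (dX (dX U)) x t).
unfold dX, dT; change (nu * (nu * 1)) with (nu ^ 2); ring.
Qed.

Lemma t21 : dT (pull (f21 nu eps zeta) U) x t = 0.
Proof.
unfold dT, pull, f21. apply Derive_const.
Qed.
End S.

Theorem corollary3 (nu eps zeta : R) (hnu : 0 <= nu) (heps : eps = 0 \/ eps = 1)
    (hz : 1 + zeta * nu ^ 2 <> 0) :
  describes_pss (E_eq nu eps)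
    (f11 nu eps zeta) (f12 nu eps zeta)
    (f21 nu eps zeta) (f22 nu eps zeta)
    (f31 nu eps zeta) (f32 nu eps zeta).
Proof.
split; [|split; [|split]].
- destruct (Req_dec nu 0) as [Hn|Hn].
  + subst nu. destruct heps as [He|He]; subst eps.
    * exists 0, 0, 0. left. unfold f11. rewrite sqrt_0.
      replace (1 + zeta * 0 ^ 2) with 1 by ring. intro H. ring_simplify in H. lra.
    * exists ((zeta / 3 - 1 / 4)), 0, 0. left. unfold f11. rewrite sqrt_0.
      replace (1 + zeta * 0 ^ 2) with 1 by ring. intro H. ring_simplify in H. lra.
  + destruct (Req_dec (f11 nu eps zeta 0 0 0) 0) as [H|H].
    * exists 0, 0, 1. left. intro H'.
      assert (Hd : f11 nu eps zeta 0 0 1 - f11 nu eps zeta 0 0 0 = nu ^ 2) by (unfold f11; ring).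
      assert (nu ^ 2 = 0) by lra. apply Hn. nra.
    * exists 0, 0, 0. left. exact H.
- exists 0, 1, 0. right. unfold f22. lra.
- destruct (Req_dec nu 0) as [Hn|Hn].
  + subst nu. destruct heps as [He|He]; subst eps.
    * exists 0, 0, 0. left. unfold f31. rewrite sqrt_0.
      replace (1 + zeta * 0 ^ 2) with 1 by ring. intro H. ring_simplify in H. lra.
    * exists (zeta / 3 + 1 / 4), 0, 0. left. unfold f31. rewrite sqrt_0.
      replace (1 + zeta * 0 ^ 2) with 1 by ring. intro H. ring_simplify in H. lra.
  + destruct (Req_dec (f31 nu eps zeta 0 0 0) 0) as [H|H].
    * exists 0, 0, 1. left. intro H'.
      assert (Hd : f31 nu eps zeta 0 0 1 - f31 nu eps zeta 0 0 0 = - nu ^ 2) by (unfold f31; ring).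
      assert (nu ^ 2 = 0) by lra. apply Hn. nra.
    * exists 0, 0, 0. left. exact H.
- intros U HU HE x t.
  pose proof (HU nil x t) as [H0 [H0T _]].
  pose proof (HU (cons DX nil) x t) as [H1 _].
  pose proof (HU (cons DX (cons DX nil)) x t) as [H2 [H2T _]].
  simpl in *.
  specialize (HE x t). unfold E_eq in HE.
  unfold dform, wedge.
  rewrite (d12 nu eps zeta U x t H0 H2), (d32 nu eps zeta U x t H0 H2),
    (d22 nu eps zeta U x t H1), (t11 nu eps zeta U x t H0T H2T),
    (t31 nu eps zeta U x t H0T H2T), t21.
  unfold pull, f11, f12, f21, f22, f31, f32.
  assert (Hs : sqrt nu * sqrt nu = nu) by (apply sqrt_sqrt; lra).
  set (s := sqrt nu) in *.
  rewrite <- Hs in HE, hz |- *.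
  set (a := U x t) in *. set (b := dX U x t) in *. set (c := dX (dX U) x t) in *.
  set (d := dX (dX (dX U)) x t) in *. set (e := dT U x t) in *.
  set (g := dT (dX (dX U)) x t) in *.
  split; [|split].
  + apply Rminus_diag_uniq. match type of HE with ?E = 0 => transitivity E; [field; exact hz | exact HE] end.
  + field. exact hz.
  + apply Rminus_diag_uniq. match type of HE with ?E = 0 => transitivity (- E); [field; exact hz | rewrite HE; ring] end.
Qed.
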